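(* Let $V$ be a real vector space of dimension $n$, $1\le k\le n-1$. For $B\in\wedge^{k+1}V^*$ and a subspace $L\subseteq V\oplus\wedge^kV^*$ set $e^BL=\{X+\alpha+i_XB\mid X+\alpha\in L\}$. Then: (a) if $L\subseteq\wedge^kV^*$ is weakly lagrangian, then $e^BL$ is weakly lagrangian for every $B\in\wedge^{k+1}V^*$; (b) if $L$ is a standard weakly lagrangian subspace with $\mathrm{pr}_1(L)\neq\{0\}$, then $e^BL$ is weakly lagrangian for every $B\in\wedge^{k+1}V^*$ if and only if $L$ is lagrangian; (c) if $L$ is a non-standard weakly lagrangian subspace, then there exists $B\in\wedge^{k+1}V^*$ such that $e^BL$ is not weakly lagrangian.
   Context: On $V\oplus\wedge^kV^*$ consider the pairing $\langle X+\alpha,Y+\beta\rangle=i_X\beta+i_Y\alpha\in\wedge^{k-1}V^*$; $L^\perp$ is the orthogonal of $L$; $L$ is isotropic if $L\subseteq L^\perp$, lagrangian if $L=L^\perp$, and weakly lagrangian if isotropic and $L\cap V=\mathrm{pr}_2(L)^\circ$, where $\mathrm{pr}_1,\mathrm{pr}_2$ are the projections onto $V$, $\wedge^kV^*$, and for $S\subseteq\wedge^kV^*$, $S^\circ=\{X\in V\mid i_X\eta=0\ \forall\eta\in S\}$. For $E\subseteq V$, $\mathrm{Ann}(E)=\{\alpha\in\wedge^kV^*\mid i_Y\alpha=0\ \forall Y\in E\}$. An isotropic $L$ with $E=\mathrm{pr}_1(L)$ is standard if $\mathrm{Ann}(E)^\circ=E$ (equivalently $\dim E=n$ or $\dim E\le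 n-k$), and non-standard otherwise. *)

(* Defs.v *)
From HB Require Import structures.
From mathcomp Require Import all_boot all_order all_algebra.
From mathcomp Require Import reals.
Set Implicit Arguments. Unset Strict Implicit. Unset Printing Implicit Defensive.
Import Order.TTheory GRing.Theory Num.Theory.
Local Open Scope ring_scope.

(* A (candidate) element of wedge^p V^* is
   a function on finite sequences of vectors; only its values on sequences of
   length p matter.  [is_form p f] says f is an alternating p-linear form on V
   (and vanishes on sequences of the wrong length, so that equality of forms
   is pointwise equality of functions). *)
Definition kform (R : realType) (n : nat) := seq 'rV[R]_n -> R.

Definition is_form (R : realType) (n p : nat) (f : kform R n) : Prop :=
  [/\ (forall s, size s <> p -> f s = 0),
      (forall (s1 s2 : seq 'rV[R]_n) (a : R) (x y : 'rV[R]_n),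
          (size s1 + size s2).+1 = p ->
          f (s1 ++ (a *: x + y) :: s2) = a * f (s1 ++ x :: s2) + f (s1 ++ y :: s2))
    & (forall s, size s = p -> ~~ uniq s -> f s = 0)].

Definition iprod (R : realType) (n : nat) (X : 'rV[R]_n) (a : kform R n) : kform R n :=
  fun s => a (X :: s).

Definition zero_form (R : realType) (n : nat) : kform R n := fun _ => 0.

Definition sub_pred (R : realType) (n : nat) := 'rV[R]_n -> kform R n -> Prop.

Definition is_subspace (R : realType) (n k : nat) (L : sub_pred R n) : Prop :=
  [/\ (forall X a, L X a -> is_form k a),
      L 0 (@zero_form R n)
    & (forall (c : R) X a Y b, L X a -> L Y b ->
          L (c *: X + Y) (fun s => c * a s + b s))].

Definition pair_zero (R : realType) (n : nat) X (a : kform R n) Y (b : kform R n) : Prop :=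
  forall s, iprod X b s + iprod Y a s = 0.

Definition Lperp (R : realType) (n k : nat) (L : sub_pred R n) : sub_pred R n :=
  fun Y b => is_form k b /\ forall X a, L X a -> pair_zero X a Y b.

Definition isotropic (R : realType) (n : nat) (L : sub_pred R n) : Prop :=
  forall X a Y b, L X a -> L Y b -> pair_zero X a Y b.

Definition lagrangian (R : realType) (n k : nat) (L : sub_pred R n) : Prop :=
  forall Y b, L Y b <-> Lperp k L Y b.

Definition prV (R : realType) (n : nat) (L : sub_pred R n) : 'rV[R]_n -> Prop :=
  fun X => exists a, L X a.

Definition prW (R : realType) (n : nat) (L : sub_pred R n) : kform R n -> Prop :=
  fun a => exists X, L X a.

Definition capV (R : realType) (n : nat) (L : sub_pred R n) : 'rV[R]_n -> Prop :=
  fun X => L X (@zero_form R n).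

Definition polar (R : realType) (n : nat) (S : kform R n -> Prop) : 'rV[R]_n -> Prop :=
  fun X => forall eta, S eta -> forall s, iprod X eta s = 0.

Definition Ann (R : realType) (n k : nat) (E : 'rV[R]_n -> Prop) : kform R n -> Prop :=
  fun a => is_form k a /\ forall Y, E Y -> forall s, iprod Y a s = 0.

Definition weakly_lagrangian (R : realType) (n : nat) (L : sub_pred R n) : Prop :=
  isotropic L /\ forall X, capV L X <-> polar (prW L) X.

Definition standard (R : realType) (n k : nat) (L : sub_pred R n) : Prop :=
  forall X, polar (Ann k (prV L)) X <-> prV L X.

Definition eB (R : realType) (n : nat) (B : kform R n) (L : sub_pred R n) : sub_pred R n :=
  fun Y c => exists X a, [/\ L X a, Y = X & c = (fun s => a s + iprod X B s)].

(* Main.v *)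
Require Import Defs.
From HB Require Import structures.
From mathcomp Require Import all_boot all_order all_algebra.
From mathcomp Require Import reals.
From mathcomp Require Import ring lra.
From Stdlib Require Import FunctionalExtensionality Classical.
Set Implicit Arguments. Unset Strict Implicit. Unset Printing Implicit Defensive.
Import Order.TTheory GRing.Theory Num.Theory.
Local Open Scope ring_scope.

Section Forms.
Variables (R : realType) (n : nat).
Implicit Types (f g : kform R n) (x y : 'rV[R]_n) (s t : seq 'rV[R]_n).

Lemma form_size p f s : is_form p f -> size s <> p -> f s = 0.
Proof. by case=> H _ _; apply: H. Qed.

Lemma form_lin0 p f c x y s : is_form p f ->
  f ((c *: x + y) :: s) = c * f (x :: s) + f (y :: s).
Proof.
move=> Hf; case: (Hf) => Hs Hl _.
have [e|ne] := eqVneq (size s).+1 p; first exact: (Hl [::] s c x y e).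
have Hn : forall z, size (z :: s) <> p by move=> z /= /eqP; rewrite (negbTE ne).
by rewrite !(form_size Hf (Hn _)) mulr0 addr0.
Qed.

Lemma form_0 p f s : is_form p f -> f (0 :: s) = 0.
Proof.
move=> Hf; have := form_lin0 1 0 0 s Hf.
rewrite scale1r addr0 mul1r => H; lra.
Qed.

Lemma form_swap p f x y t : is_form p f -> f (x :: y :: t) = - f (y :: x :: t).
Proof.
move=> Hf; case: (Hf) => Hs Hl Ha.
have [e|ne] := eqVneq (size t).+2 p; last first.
  have Hn : forall z w, size (z :: w :: t) <> p by move=> z w /= /eqP; rewrite (negbTE ne).
  by rewrite !(form_size Hf (Hn _ _)) oppr0.
have H0 : f ((1 *: x + y) :: (1 *: x + y) :: t) = 0.
  by apply: Ha => //=; rewrite inE eqxx.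
have L1 w : f (w :: (1 *: x + y) :: t) = f (w :: x :: t) + f (w :: y :: t).
  by rewrite (Hl [:: w] t 1 x y) ?mul1r //= addnC.
rewrite (form_lin0 _ _ _ _ Hf) !mul1r !L1 in H0.
have Hxx : f (x :: x :: t) = 0 by apply: Ha => //=; rewrite inE eqxx.
have Hyy : f (y :: y :: t) = 0 by apply: Ha => //=; rewrite inE eqxx.
rewrite Hxx Hyy in H0; lra.
Qed.

Lemma form_self p f x t : is_form p f -> f (x :: x :: t) = 0.
Proof. move=> Hf; have := form_swap x x t Hf; lra. Qed.

Lemma iprod_form p f x : is_form p.+1 f -> is_form p (iprod x f).
Proof.
case=> Hs Hl Ha; split.
- by move=> s Hsz; apply: Hs => /= -[].
- by move=> s1 s2 c y z e; apply: (Hl (x :: s1)); rewrite /= -e.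
- move=> s Hsz Hu; apply: Ha; first by rewrite /= Hsz.
  by rewrite /= negb_and Hu orbT.
Qed.

Lemma iprod_form0 f x t : is_form 0 f -> iprod x f t = 0.
Proof. by move=> Hf; apply: (form_size Hf). Qed.

Lemma form_comb p f g c : is_form p f -> is_form p g ->
  is_form p (fun s => c * f s + g s).
Proof.
case=> Fs Fl Fa [Gs Gl Ga]; split.
- by move=> s H; rewrite Fs // Gs // mulr0 addr0.
- by move=> s1 s2 a y z e; rewrite Fl // Gl //; ring.
- by move=> s H1 H2; rewrite Fa // Ga // mulr0 addr0.
Qed.

Lemma form_zero p : is_form p (@zero_form R n).
Proof. by split=> //= *; rewrite /zero_form; ring. Qed.

Section Wedge.
Variable xi : 'rV[R]_n -> R.
Hypothesis xi_lin : forall c x y, xi (c *: x + y) = c * xi x + xi y.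

Fixpoint wedge (g : kform R n) (s : seq 'rV[R]_n) {struct s} : R :=
  match s with
  | [::] => 0
  | x :: s' => xi x * g s' - wedge (iprod x g) s'
  end.

Lemma wedge_ext g1 g2 s : (forall t, g1 t = g2 t) -> wedge g1 s = wedge g2 s.
Proof.
elim: s g1 g2 => //= x s IH g1 g2 H; rewrite H (IH _ (iprod x g2)) //.
by move=> t; apply: H.
Qed.

Lemma wedge0 g s : (forall t, g t = 0) -> wedge g s = 0.
Proof.
elim: s g => //= x s IH g H; rewrite H IH ?mulr0 ?subr0 //.
by move=> t; apply: H.
Qed.

Lemma wedge_lin c g1 g2 s :
  wedge (fun t => c * g1 t + g2 t) s = c * wedge g1 s + wedge g2 s.
Proof.
elim: s g1 g2 => //= [|x s IH] g1 g2; first by ring.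
have -> : wedge (iprod x (fun t => c * g1 t + g2 t)) s
   = c * wedge (iprod x g1) s + wedge (iprod x g2) s by apply: IH.
ring.
Qed.

Lemma wedge_size k g s : is_form k g -> size s <> k.+1 -> wedge g s = 0.
Proof.
elim: s k g => //= x s IH k g Hg Hsz.
rewrite (form_size Hg); last by move=> e; apply: Hsz; rewrite e.
case: k Hg Hsz => [|k] Hg Hsz.
  by rewrite wedge0 ?mulr0 ?subr0 // => t; apply: iprod_form0.
rewrite (IH k) ?mulr0 ?subr0 //; first exact: iprod_form.
by move=> e; apply: Hsz; rewrite e.
Qed.

Lemma wedge_multi k g s1 s2 c x y : is_form k g ->
  (size s1 + size s2).+1 = k.+1 ->
  wedge g (s1 ++ (c *: x + y) :: s2) =
  c * wedge g (s1 ++ x :: s2) + wedge g (s1 ++ y :: s2).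
Proof.
elim: s1 k g => [|z s1 IH] k g Hg /= e.
  rewrite xi_lin.
  rewrite (@wedge_ext _ (fun t => c * iprod x g t + iprod y g t)); last first.
    by move=> t; rewrite /iprod (form_lin0 _ _ _ _ Hg).
  rewrite wedge_lin; ring.
case: k Hg e => [|k] Hg e; first by [].
case: (Hg) => _ Hl _.
rewrite (Hl s1 s2); last by move: e => [] ->.
rewrite (IH k (iprod z g)); first ring.
  exact: iprod_form.
by move: e => [] ->.
Qed.

Lemma wedge_vanish d x p q : (forall t, x \in t -> d t = 0) ->
  wedge d (p ++ x :: q) = (-1) ^+ size p * xi x * d (p ++ q).
Proof.
elim: p d => [|z p IH] d H /=.
  rewrite wedge0 ?expr0 ?mul1r ?subr0 //.
  by move=> t; rewrite /iprod H // inE eqxx.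
rewrite H; last by rewrite mem_cat inE eqxx orbT.
rewrite IH; last by move=> t Ht; rewrite /iprod H // inE Ht orbT.
rewrite exprS /iprod; ring.
Qed.

Lemma form_move k g x p q : is_form k g ->
  g (x :: p ++ q) = (-1) ^+ size p * g (p ++ x :: q).
Proof.
elim: p k g => [|z p IH] k g Hg /=; first by rewrite expr0 mul1r.
rewrite (form_swap _ _ _ Hg).
case: k Hg => [|k] Hg.
  by rewrite !(form_size Hg) ?mulr0 ?oppr0.
have := IH k (iprod z g) (iprod_form z Hg); rewrite /iprod => ->.
rewrite exprS; ring.
Qed.

Lemma wedge_alt k g s : is_form k g -> size s = k.+1 -> ~~ uniq s ->
  wedge g s = 0.
Proof.
elim: s k g => //= x s IH k g Hg [Hsz]; rewrite negb_and negbK => /orP[Hx|Hu].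
  case/splitPr: Hx Hsz => p q Hsz.
  rewrite wedge_vanish; last first.
    move=> t Ht; rewrite /iprod; case: (Hg) => Hs _ Ha.
    have [e|ne] := eqVneq (size t).+1 k.
      by apply: Ha => //=; rewrite Ht.
    by apply: Hs => /= /eqP; rewrite (negbTE ne).
  rewrite /iprod (form_move _ _ _ Hg).
  have Hsq := sqrr_sign R (size p); rewrite expr2 in Hsq.
  transitivity (xi x * g (p ++ x :: q) * (1 - (-1) ^+ size p * (-1) ^+ size p)).
    ring.
  by rewrite Hsq subrr mulr0.
case: (Hg) => _ _ Ha; rewrite Ha // mulr0 sub0r.
clear Ha; case: k Hg Hsz => [|k] Hg Hsz.
  by move: Hsz Hu; case: s {IH}.
by rewrite (IH k) ?oppr0 //; exact: iprod_form.
Qed.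

Lemma wedge_form k g : is_form k g -> is_form k.+1 (wedge g).
Proof.
move=> Hg; split.
- by move=> s; apply: wedge_size.
- by move=> s1 s2 c x y e; apply: wedge_multi Hg e.
- by move=> s; apply: wedge_alt.
Qed.

End Wedge.
End Forms.
Section Main.
Variables (R : realType) (n k : nat).
Implicit Types (L : sub_pred R n).

Definition capB L (B : kform R n) X :=
  exists a, L X a /\ forall s, a s + B (X :: s) = 0.

Lemma iso_self L X a s : isotropic L -> L X a -> a (X :: s) = 0.
Proof. move=> Hi HL; have := Hi _ _ _ _ HL HL s; rewrite /iprod => H; lra. Qed.

Lemma exists_xi (M : 'M[R]_n) (x : 'rV[R]_n) : ~~ (x <= M)%MS ->
  exists xi : 'rV[R]_n -> R,
    [/\ forall c y z, xi (c *: y + z) = c * xi y + xi z, xi x = 1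
      & forall y, (y <= M)%MS -> xi y = 0].
Proof.
rewrite submxE => Hx.
have [j Hj] : exists j, (x *m cokermx M) 0 j != 0.
  apply: NNPP => Hn; move/negP: Hx; apply; apply/eqP/matrixP => i j.
  apply: NNPP => h; apply: Hn; exists j; apply/eqP => e; apply: h.
  by rewrite ord1 e mxE.
exists (fun y => (y *m cokermx M) 0 j / (x *m cokermx M) 0 j); split.
- move=> c y z; rewrite mulmxDl -scalemxAl !mxE.
  by rewrite mulrDl mulrA.
- by rewrite divff.
- by move=> y; rewrite submxE => /eqP ->; rewrite mxE mul0r.
Qed.

Lemma capB_lin L B c X Y : is_subspace k L -> is_form k.+1 B ->
  capB L B X -> capB L B Y -> capB L B (c *: X + Y).
Proof.
case=> _ _ Hc HB [aX [LX HX]] [aY [LY HY]].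
exists (fun s => c * aX s + aY s); split; first exact: Hc.
move=> s; rewrite (form_lin0 _ _ _ _ HB).
transitivity (c * (aX s + B (X :: s)) + (aY s + B (Y :: s))); first ring.
by rewrite HX HY mulr0 addr0.
Qed.

Lemma kill L : is_subspace k L -> isotropic L ->
  exists B, is_form k.+1 B /\ forall X, prV L X -> capB L B X.
Proof.
move=> HL Hi; have [Hform H0 Hc] := HL.
suff H : forall d, exists B (M : 'M[R]_n), [/\ is_form k.+1 B,
    (forall X, (X <= M)%MS -> capB L B X) &
    ((forall X, prV L X -> (X <= M)%MS) \/ (d <= \rank M)%N)].
  have [B [M [HB HM [Hfull|Hr]]]] := H n.+1.
    by exists B; split=> // X /Hfull /HM.
  by have := leq_trans Hr (rank_leq_col M); rewrite ltnn.
elim=> [|d [B [M [HB HM Hd]]]].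
  exists (@zero_form R n), 0; split; [exact: form_zero | | by right].
  move=> X; rewrite submx0 => /eqP ->; exists (@zero_form R n); split=> //.
  by move=> s; rewrite /zero_form addr0.
case: (classic (forall X, prV L X -> (X <= M)%MS)) => [Hfull|Hnf].
  by exists B, M; split=> //; left.
have Hd' : (d <= \rank M)%N by case: Hd.
have [X1 [[a1 HX1] HnX1]] : exists X1, prV L X1 /\ ~~ (X1 <= M)%MS.
  apply: NNPP => Hn; apply: Hnf => X HX; apply: NNPP => HnX; apply: Hn.
  by exists X; split=> //; apply/negP.
have [xi [xiL xi1 xi0]] := exists_xi HnX1.
pose al := fun s => 1 * a1 s + iprod X1 B s.
have Hal : is_form k al by apply: form_comb; [exact: Hform HX1 | exact: iprod_form].
pose B' := fun s => (-1) * wedge xi al s + B s.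
have HB' : is_form k.+1 B' by apply: form_comb => //; exact: wedge_form.
exists B', (M + X1)%MS; split=> //; last first.
  right; have : (M < M + X1)%MS.
    rewrite ltmxE addsmxSl /=; apply: contra HnX1 => h.
    exact: submx_trans (addsmxSr M X1) h.
  by rewrite ltmxErank => /andP[_ h]; apply: leq_ltn_trans Hd' h.
have cM : forall Z, (Z <= M)%MS -> capB L B' Z.
  move=> Z HZM; have [aZ [HZ HaZ]] := HM Z HZM; exists aZ; split=> // s.
  rewrite /B' /= (xi0 _ HZM).
  rewrite (@wedge0 _ _ xi (iprod Z al)); last first.
  2: by rewrite mul0r subr0 mulr0 add0r; exact: HaZ.
  move=> t; rewrite /iprod /al /iprod mul1r.
  have := Hi _ _ _ _ HX1 HZ t; rewrite /iprod => h1.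
  have h2 := HaZ (X1 :: t).
  rewrite (form_swap _ _ _ HB); lra.
have cX1 : capB L B' X1.
  exists a1; split=> // s; rewrite /B' /= xi1 mul1r.
  rewrite (@wedge0 _ _ xi (iprod X1 al)); last first.
    move=> t; rewrite /iprod /al /iprod mul1r (iso_self _ Hi HX1) add0r.
    exact: form_self HB.
  rewrite /al /iprod; ring.
move=> X /sub_addsmxP [[u1 u2] /= ->].
rewrite (mx11_scalar u2) mul_scalar_mx addrC.
apply: capB_lin => //; apply: cM; exact: submxMl.
Qed.

End Main.
Section Parts.
Variables (R : realType) (n k : nat).
Implicit Types (L : sub_pred R n).

Lemma eB_iso L (B : kform R n) : isotropic L -> is_form k.+1 B -> isotropic (eB B L).
Proof.
move=> Hi HB X c Y d [X' [a [HLa -> ->]]] [Y' [b [HLb -> ->]]] s.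
have := Hi _ _ _ _ HLa HLb s; rewrite /iprod => h.
rewrite (form_swap _ _ _ HB); lra.
Qed.

Lemma capV_polar L X : isotropic L -> capV L X -> polar (prW L) X.
Proof.
move=> Hi HX eta [Y HY] s; have := Hi _ _ _ _ HY HX s.
by rewrite /iprod /zero_form add0r.
Qed.

Lemma part_a L : is_subspace k L -> (forall X a, L X a -> X = 0) ->
  weakly_lagrangian L ->
  forall B : kform R n, is_form k.+1 B -> weakly_lagrangian (eB B L).
Proof.
move=> HL H0 [Hi Hw] B HB; split; first exact: eB_iso.
move=> X; split; first exact/capV_polar/eB_iso.
move=> Hp.
have HpL : polar (prW L) X.
  move=> eta [Y HY] s; have Y0 := H0 _ _ HY; subst Y.
  have := Hp (fun s => eta s + iprod 0 B s) _ s.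
  rewrite /iprod (form_0 _ HB) addr0; apply.
  by exists 0, 0, eta.
have HX := (Hw X).2 HpL; have X0 := H0 _ _ HX; subst X.
exists 0, (@zero_form R n); split=> //.
by apply: functional_extensionality => s; rewrite /iprod (form_0 _ HB) /zero_form addr0.
Qed.

Lemma part_b L : is_subspace k L -> weakly_lagrangian L -> standard k L ->
  (exists X, prV L X /\ X <> 0) ->
  ((forall B : kform R n, is_form k.+1 B -> weakly_lagrangian (eB B L))
     <-> lagrangian k L).
Proof.
move=> HL [Hi Hw] Hstd [X1 [[a1 HX1] X1n0]]; have [Hform H0 Hc] := HL; split.
- move=> Hall.
  have K : forall eta, Ann k (prV L) eta -> L 0 eta.
    move=> eta [Heta Hann].
    have Hx1 : ~~ (X1 <= (0 : 'M[R]_n))%MS by rewrite submx0; apply/eqP.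
    have [xi [xiL xi1 _]] := exists_xi Hx1.
    pose ga := fun s => (-1) * a1 s + eta s.
    have Hga : is_form k ga by apply: form_comb => //; exact: Hform HX1.
    pose B := wedge xi ga.
    have HB : is_form k.+1 B by exact: wedge_form.
    have [_ HwB] := Hall B HB.
    have hga1 : forall t, ga (X1 :: t) = 0.
      move=> t; rewrite /ga (iso_self _ Hi HX1).
      have := Hann X1 (ex_intro _ a1 HX1) t; rewrite /iprod => ->; ring.
    have Hp : polar (prW (eB B L)) X1.
      move=> e [Y [X [a [HLa _ ->]]]] s; rewrite /iprod /B /=.
      rewrite hga1 xi1 (@wedge0 _ _ xi (iprod X1 (iprod X ga))); last first.
        by move=> t; rewrite /iprod (form_swap _ _ _ Hga) hga1 oppr0.
      have := Hann X (ex_intro _ a HLa) s; rewrite /iprod => h1.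
      have := Hi _ _ _ _ HLa HX1 s; rewrite /iprod => h2.
      rewrite /ga; lra.
    have [X [a [HLa eX ez]]] := (HwB X1).2 Hp; subst X.
    have ha : forall s, a s = a1 s - eta s.
      move=> s; have := equal_f ez s; rewrite /zero_form /iprod /B /= xi1.
      rewrite (@wedge0 _ _ xi (iprod X1 ga)) // /ga => h; lra.
    have := Hc (-1) X1 a X1 a1 HLa HX1; rewrite scaleN1r addNr.
    congr L; apply: functional_extensionality => s; rewrite ha; ring.
  move=> Y b; split.
    move=> HY; split; first exact: Hform HY.
    by move=> X a HX; apply: Hi.
  move=> [Hb Hperp].
  have HYE : prV L Y.
    apply/(Hstd Y).1 => eta Heta s.
    have := Hperp 0 eta (K eta Heta) s.
    by rewrite /iprod (form_0 _ Hb) add0r.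
  have [a0 Ha0] := HYE.
  pose eta := fun s => (-1) * a0 s + b s.
  have Heta : Ann k (prV L) eta.
    split; first by apply: form_comb => //; exact: Hform Ha0.
    move=> Z [aZ HZ] s; have := Hperp Z aZ HZ s; have := Hi _ _ _ _ HZ Ha0 s.
    rewrite /iprod /eta => h1 h2; lra.
  have := Hc 1 Y a0 0 eta Ha0 (K eta Heta); rewrite scale1r addr0.
  congr L; apply: functional_extensionality => s; rewrite /eta; ring.
- move=> Hlag B HB; split; first exact: eB_iso.
  move=> X; split; first exact/capV_polar/eB_iso.
  move=> Hp.
  pose b := fun s => (-1) * iprod X B s + @zero_form R n s.
  have Hb : is_form k b by apply: form_comb; [exact: iprod_form | exact: form_zero].
  have HLb : L X b.
    apply/(Hlag X b).2; split=> // Y a HY s.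
    have := Hp (fun s => a s + iprod Y B s) (ex_intro _ Y (ex_intro _ Y (ex_intro _ a (And3 HY erefl erefl)))) s.
    rewrite /b /iprod /zero_form (form_swap _ _ _ HB) => h; lra.
  exists X, b; split=> //.
  by apply: functional_extensionality => s; rewrite /b /zero_form; ring.
Qed.

Lemma part_c L : is_subspace k L -> weakly_lagrangian L -> ~ standard k L ->
  exists B : kform R n, is_form k.+1 B /\ ~ weakly_lagrangian (eB B L).
Proof.
move=> HL [Hi Hw] Hns; have [Hform H0 Hc] := HL.
have [B [HB HK]] := kill HL Hi.
exists B; split=> // -[_ HwB].
have [X0 [HP HnE]] : exists X0, polar (Ann k (prV L)) X0 /\ ~ prV L X0.
  apply: NNPP => H; apply: Hns => X; split.
    by move=> HP; apply: NNPP => Hn; apply: H; exists X.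
  by move=> [a Ha] eta [_ Hann] s; exact: Hann X (ex_intro _ a Ha) s.
have Hp : polar (prW (eB B L)) X0.
  move=> e [Y [X [a [HLa _ ->]]]] s; rewrite /iprod.
  have [aX [HLX HaX]] := HK X (ex_intro _ a HLa).
  pose eta := fun s => (-1) * aX s + a s.
  have HL0 : L 0 eta.
    by have := Hc (-1) X aX X a HLX HLa; rewrite scaleN1r addNr.
  have Heta : Ann k (prV L) eta.
    split; first by apply: form_comb; [exact: Hform HLX | exact: Hform HLa].
    move=> Z [aZ HZ] t; have := Hi _ _ _ _ HL0 HZ t.
    by rewrite /iprod (form_0 _ (Hform _ _ HZ)) add0r.
  have := HP eta Heta s; rewrite /iprod /eta => h1.
  have h2 := HaX (X0 :: s); lra.
have [X [a [HLa eX _]]] := (HwB X0).2 Hp.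
by apply: HnE; exists a; rewrite eX.
Qed.

End Parts.

Unset Implicit Arguments.

Theorem proposition3p20 (R : realType) (n k : nat) :
  (1 <= k)%N -> (k <= n - 1)%N ->
  [/\ (* (a) *)
      (forall L : sub_pred R n, is_subspace k L ->
         (forall X a, L X a -> X = 0) ->
         weakly_lagrangian L ->
         forall B : kform R n, is_form k.+1 B -> weakly_lagrangian (eB B L)),
      (* (b) *)
      (forall L : sub_pred R n, is_subspace k L ->
         weakly_lagrangian L -> standard k L ->
         (exists X, prV L X /\ X <> 0) ->
         ((forall B : kform R n, is_form k.+1 B -> weakly_lagrangian (eB B L))
            <-> lagrangian k L))
    & (* (c) *)
      (forall L : sub_pred R n, is_subspace k L ->
         weakly_lagrangian L -> ~ standard k L ->
         exists B : kform R n, is_form k.+1 B /\ ~ weakly_lagrangian (eB B L))].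
Proof.
move=> _ _; split; [exact: part_a | exact: part_b | exact: part_c].
Qed.
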